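(* Let $G$ be a connected graph with $\delta(G)=1$ and girth at least $15$. If $G\in\mathcal U$ and $s$ is a single star support vertex of $G$, then $s$ has at most one neighbor that is not a leaf.
   Context: All graphs are finite and simple. A set $P\subseteq V(G)$ is an open packing if no two distinct vertices of $P$ have a common neighbor; it is maximal if maximal under inclusion among open packings. $\rho^o(G)$ is the maximum size of an open packing and $\rho^o_L(G)$ the minimum size of a maximal open packing; $\mathcal U$ is the class of graphs with $\rho^o_L(G)=\rho^o(G)$. A leaf is a vertex of degree $1$; a support vertex is a vertex adjacent to at least one leaf; $S_G$ is the set of support vertices. A single star support vertex is a support vertex that is an isolated vertex of the induced subgraph $G[S_G]$ (i.e., not adjacent to any other support vertex); a double star support vertex is a support vertex adjacent to another support vertex. The girth is the length of a shortest cycle ($\infty$ if acyclic). *)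

(* Defs.v *)
From mathcomp Require Import all_boot.
Set Implicit Arguments. Unset Strict Implicit. Unset Printing Implicit Defensive.

Definition simple_graph (T : finType) (e : rel T) : Prop :=
  symmetric e /\ irreflexive e.

Section Graphs.
Variables (T : finType) (e : rel T).

Definition nbhd (v : T) : {set T} := [set u | e v u].
Definition deg (v : T) : nat := #|nbhd v|.

Definition connected_graph : Prop := forall x y : T, connect e x y.

Definition min_degree_one : Prop :=
  (exists v : T, deg v = 1) /\ (forall v : T, 1 <= deg v).

Definition is_leaf (v : T) : bool := deg v == 1.
Definition is_support (v : T) : bool := [exists u, e v u && is_leaf u].

Definition single_star_support (s : T) : bool :=
  is_support s && [forall u, e s u ==> ~~ is_support u].

Definition is_graph_cycle (p : seq T) : bool :=
  [&& 3 <= size p, uniq p & cycle e p].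

Definition girth_ge (g : nat) : Prop :=
  forall p : seq T, is_graph_cycle p -> g <= size p.

Definition open_packing (P : {set T}) : bool :=
  [forall x in P, forall y in P, (x != y) ==> [disjoint nbhd x & nbhd y]].

Definition maximal_open_packing (P : {set T}) : bool :=
  open_packing P && [forall Q : {set T}, (open_packing Q && (P \subset Q)) ==> (Q == P)].

Definition rho_o : nat := \max_(P : {set T} | open_packing P) #|P|.

(* rho^o_L(G): minimum size of a maximal open packing
   (the empty set is an open packing, so maximal ones exist) *)
Definition rho_o_L : nat :=
  \big[minn/#|T|]_(P : {set T} | maximal_open_packing P) #|P|.

Definition in_class_U : Prop := rho_o_L = rho_o.

End Graphs.

(* Main.v *)
Require Import Defs.
From mathcomp Require Import all_boot zify.
From Stdlib Require Import Classical.
Set Implicit Arguments. Unset Strict Implicit. Unset Printing Implicit Defensive.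

Lemma bigmin_le (I : eqType) (r : seq I) (P : pred I) (F : I -> nat) x0 i :
  i \in r -> P i -> \big[minn/x0]_(j <- r | P j) F j <= F i.
Proof.
elim: r => [|j r IH] //; rewrite in_cons big_cons => /orP [/eqP <- Pi|ir Pi].
  by rewrite Pi geq_minl.
case: (P j); last exact: IH.
by rewrite (leq_trans (geq_minr _ _)) // IH.
Qed.

Lemma disjP (T : finType) (A B : {set T}) :
  reflect (forall x, x \in A -> x \in B -> False) [disjoint A & B].
Proof.
apply: (iffP pred0P) => [h x xa xb | h x] /=.
  by move: (h x); rewrite /= xa xb.
by apply/negP => /andP [xa xb]; exact: h x xa xb.
Qed.

Section G.
Variables (T : finType) (e : rel T).
Hypothesis esym : symmetric e.
Hypothesis eirr : irreflexive e.
Hypothesis gir : girth_ge e 15.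

Fixpoint nbw (s : seq T) : bool :=
  match s with
  | a :: ((b :: c :: _) as t) => (a != c) && nbw t
  | _ => true
  end.

Lemma short_cycle p : 3 <= size p <= 14 -> uniq p -> cycle e p -> False.
Proof.
move=> /andP [h1 h2] u c.
have := gir (p:=p); rewrite /is_graph_cycle h1 u c => /(_ isT) h.
by move: (leq_trans h h2).
Qed.

Lemma closed_short a q : path e a q -> uniq q -> a \in q -> nbw (a :: q) ->
  size q <= 14 -> False.
Proof.
move=> pq uq ain nbq sz; case/splitPr: ain pq uq nbq sz => p1 p2 pq uq nbq sz.
apply: (@short_cycle (a :: p1)).
- rewrite size_cat /= in sz.
  case: p1 pq nbq sz {uq} => [|c [|d p1]] /=.
  + by rewrite eirr.
  + by rewrite eqxx.
  + move=> _ _ sz; lia.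
- move: uq; rewrite cat_uniq /= => /and3P [u1 /norP [na _] _].
  by rewrite u1 andbT; apply: contra na => ain; rewrite ain.
- by move: pq; rewrite /cycle rcons_path cat_path /= => /and3P [-> -> _].
Qed.

Lemma nb_uniq p a : path e a p -> nbw (a :: p) -> size p <= 14 -> uniq (a :: p).
Proof.
elim: p a => [|b p IH] a; first by [].
move=> pp nbp sz.
have [eab pb] : e a b /\ path e b p by move: pp => /= /andP [].
have nbp' : nbw (b :: p) by move: nbp; case: p {IH pb sz pp} => [|c p] //= /andP [].
have ub := IH b pb nbp' (ltnW sz).
rewrite cons_uniq ub andbT; apply/negP => ain.
exact: (closed_short pp ub ain nbp sz).
Qed.

Lemma nocommon a p : path e a p -> nbw (a :: p) -> 3 <= size p <= 12 ->
  (a != last a p) && [disjoint nbhd e a & nbhd e (last a p)].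
Proof.
move=> pp nbp /andP [s1 s2].
have up : uniq (a :: p) by apply: nb_uniq pp nbp _; lia.
apply/andP; split.
  move: up s1; case/lastP: p {pp nbp s2} => [|q b] u1 s1'; first by [].
  move: u1; rewrite last_rcons cons_uniq mem_rcons in_cons negb_or.
  by move=> /andP [/andP [nab _] _].
apply/disjP => h; rewrite !inE => eah ebh.
case hin: (h \in a :: p).
  move: hin; rewrite in_cons => /orP [/eqP hA|hp].
    by move: eah; rewrite hA eirr.
  case/splitPr: hp pp nbp s1 s2 up eah ebh => p1 p2 pp nbp s1 s2 up eah ebh.
  case: p1 pp nbp s1 s2 up eah ebh => [|c p1] pp nbp s1 s2 up eah ebh.
    apply: (@short_cycle (h :: p2)).
    - by move: s1 s2 => /=; lia.
    - by move: up => /= /andP [].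
    - move: pp => /= /andP [_ pp2]; rewrite /cycle rcons_path pp2 /=.
      by move: ebh; rewrite last_cat /= esym.
  apply: (@short_cycle (a :: rcons (c :: p1) h)).
  - move: s1 s2; rewrite /= size_cat size_rcons /=; lia.
  - move: up; rewrite -(cat1s h p2) -cat_cons catA cat_uniq => /andP [+ _].
    by rewrite cats1.
  - rewrite /cycle rcons_path last_rcons (esym h a) eah andbT rcons_path.
    move: pp; rewrite cat_path => /andP [-> /=].
    by move=> /andP [-> _].
apply: (@short_cycle (a :: rcons p h)).
- by rewrite /= size_rcons; lia.
- move: hin up; rewrite in_cons cons_uniq => /norP [nha nhp] /andP [nap up].
  rewrite cons_uniq rcons_uniq mem_rcons in_cons negb_or nap nhp up eq_sym nha.
  by [].
- by rewrite /cycle !rcons_path pp last_rcons ebh esym eah.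
Qed.

Definition cf (x y : T) : bool := (x != y) && ~~ [disjoint nbhd e x & nbhd e y].
Definition dom (X : {set T}) (v : T) : Prop := v \in X \/ exists2 a, a \in X & cf a v.

Lemma packP (P : {set T}) : reflect (forall x y, x \in P -> y \in P -> x != y ->
   [disjoint nbhd e x & nbhd e y]) (open_packing e P).
Proof.
apply: (iffP forall_inP) => [h x y xP yP nxy | h x xP].
  by move: (h x xP) => /forall_inP /(_ y yP) /implyP; apply.
by apply/forall_inP => y yP; apply/implyP; apply: h.
Qed.

Lemma packNcf (P : {set T}) x y : open_packing e P -> x \in P -> y \in P -> ~~ cf x y.
Proof.
move=> /packP h xP yP; rewrite /cf negb_and negbK.
by case: (eqVneq x y) => [->|nxy] //=; rewrite negbK; apply: h.
Qed.

Lemma KL (J A B : {set T}) : in_class_U e -> open_packing e (J :|: A) ->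
  open_packing e (J :|: B) -> [disjoint B & J] ->
  (forall v, dom B v -> dom A v \/ dom J v) -> #|A| < #|B| -> False.
Proof.
move=> hU pA pB dBJ hdom cAB.
have [M0 /andP [pM sM] maxM] : exists2 M0, open_packing e M0 && (J :|: A \subset M0) &
   forall Q, open_packing e Q && (J :|: A \subset Q) -> #|Q| <= #|M0|.
  have Pi0 : open_packing e (J :|: A) && (J :|: A \subset J :|: A) by rewrite pA subxx.
  case: (@arg_maxnP _ (J :|: A) (fun P : {set T} => open_packing e P && (J :|: A \subset P))
     (fun P => #|P|) Pi0).
  by move=> M1 h1 h2; exists M1.
have mM : maximal_open_packing e M0.
  rewrite /maximal_open_packing pM /=; apply/forallP => Q; apply/implyP => /andP [pQ sQ].
  rewrite eq_sym eqEcard sQ /=; apply: maxM; rewrite pQ /=; exact: subset_trans sM sQ.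
have AM : A \subset M0 by apply: subset_trans sM; exact: subsetUr.
have JM : J \subset M0 by apply: subset_trans sM; exact: subsetUl.
have L1 : rho_o_L e <= #|M0|.
  by rewrite /rho_o_L; apply: bigmin_le => //; exact: mem_index_enum.
pose N := (M0 :\: A) :|: B.
have key : forall m, m \in M0 -> m \notin A -> m \notin J -> ~ dom B m.
  move=> m mM0 mA mJ /hdom [[mA'|[a aA cam]]|[mJ'|[a aJ cam]]].
  - by rewrite mA' in mA.
  - by move: (packNcf pM (subsetP AM a aA) mM0); rewrite cam.
  - by rewrite mJ' in mJ.
  - by move: (packNcf pM (subsetP JM a aJ) mM0); rewrite cam.
have dMB : [disjoint (M0 :\: A) & B].
  apply/disjP => x; rewrite inE => /andP [xA xM] xB.
  have xJ : x \notin J by apply/negP => xJ; move/disjP: dBJ => /(_ x xB xJ).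
  by apply: (key x xM xA xJ); left.
have pN : open_packing e N.
  apply/packP => x y; rewrite !inE.
  have cB : forall x y, x \in B -> y \in B -> x != y -> [disjoint nbhd e x & nbhd e y].
    by move=> x1 y1 x1B y1B; move/packP: pB; apply; rewrite ?inE ?x1B ?y1B ?orbT.
  have cMB : forall x y, x \in M0 -> x \notin A -> y \in B -> x != y ->
       [disjoint nbhd e x & nbhd e y].
    move=> x1 y1 x1M x1A y1B nxy.
    case x1J : (x1 \in J).
      by move/packP: pB; apply; rewrite ?inE ?x1J ?y1B ?orbT.
    have := key x1 x1M x1A (negbT x1J).
    case dj: [disjoint nbhd e x1 & nbhd e y1] => // H; exfalso; apply: H; right.
    exists y1 => //; rewrite /cf eq_sym nxy /= disjoint_sym dj.
    by [].
  move=> /orP [/andP [xA xM]|xB] /orP [/andP [yA yM]|yB] nxy.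
  - by move/packP: pM; apply.
  - exact: cMB.
  - by rewrite disjoint_sym; apply: cMB => //; rewrite eq_sym.
  - exact: cB.
have cN : #|M0| < #|N|.
  rewrite /N cardsU.
  have -> : (M0 :\: A) :&: B = set0 by apply: disjoint_setI0.
  rewrite cards0 subn0.
  have := cardsID A M0; rewrite (setIidPr AM) => <-.
  lia.
have L2 : #|N| <= rho_o e by rewrite /rho_o; apply: leq_bigmax_cond.
move: hU; rewrite /in_class_U => h.
by move: (leq_ltn_trans L1 (leq_trans cN L2)); rewrite h ltnn.
Qed.

Lemma closed_nb a q : path e a q -> nbw (a :: q) -> size q <= 14 -> a \in q -> False.
Proof. by move=> pq nq sq aq; move: (nb_uniq pq nq sq); rewrite cons_uniq aq. Qed.

Ltac cfs := try done; try (by rewrite eq_sym); try (by rewrite esym).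
Ltac bs := rewrite /=; repeat (apply/andP; split); try done;
  try (by rewrite esym); try (by rewrite eq_sym).

Inductive jw (r q g : T) : Prop :=
  JW a b f of e r a & a != q & e a b & b != r & e b f & f != a & e f g & g != b.

Lemma mkJ (r q : T) : (forall a b, e r a -> a != q -> e a b -> b != r ->
    exists f g, [/\ e b f, f != a, e f g & g != b]) ->
  exists J : {set T}, [/\ (forall g, g \in J -> jw r q g),
   (forall a b, e r a -> a != q -> e a b -> b != r ->
      exists2 g, g \in J & exists f, [/\ e b f, e f g & g != b]) &
   (forall g1 g2, g1 \in J -> g2 \in J -> g1 != g2 -> [disjoint nbhd e g1 & nbhd e g2])].
Proof.
move=> H.
pose P := [set p : T * T | [&& e r p.1, p.1 != q, e p.1 p.2 & p.2 != r]].
pose F (p : T * T) := odflt p.2 [pick g | [exists f, [&& e p.2 f, f != p.1, e f g & g != p.2]]].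
have FS : forall p, p \in P -> exists f, [/\ e p.2 f, f != p.1, e f (F p) & F p != p.2].
  move=> [a b]; rewrite inE /= => /and4P [h1 h2 h3 h4]; rewrite /F /=.
  case: pickP => [g /existsP [f /and4P [k1 k2 k3 k4]]|none] /=.
    by exists f.
  have [f [g [k1 k2 k3 k4]]] := H a b h1 h2 h3 h4.
  move: (none g) => /existsP; case; exists f; by rewrite k1 k2 k3 k4.
exists (F @: P); split.
- move=> g /imsetP [[a b] pP ->].
  have [f [k1 k2 k3 k4]] := FS _ pP.
  move: pP; rewrite inE /= => /and4P [h1 h2 h3 h4].
  by apply: (@JW r q _ a b f).
- move=> a b h1 h2 h3 h4.
  have pP : (a, b) \in P by rewrite inE /= h1 h2 h3 h4.
  exists (F (a, b)); first exact: imset_f.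
  have [f [k1 k2 k3 k4]] := FS _ pP; by exists f.
move=> gg1 gg2 /imsetP [[a1 b1] pP1 ->] /imsetP [[a2 b2] pP2 ->] ng.
have [f1 [k1 k2 k3 k4]] := FS _ pP1.
have [f2 [l1 l2 l3 l4]] := FS _ pP2.
move: pP1 pP2; rewrite !inE /= => /and4P [h1 h2 h3 h4] /and4P [m1 m2 m3 m4].
move: k1 k2 k3 k4 l1 l2 l3 l4 ng; set G1 := F (a1, b1); set G2 := F (a2, b2); rewrite /=.
move=> k1 k2 k3 k4 l1 l2 l3 l4 ng.
case: (eqVneq a1 a2) => [ea|na].
  case: (eqVneq b1 b2) => [eb|nb].
    by move: ng; rewrite /G1 /G2 ea eb eqxx.
  subst a2.
  have := @nocommon G1 [:: f1; b1; a1; b2; f2; G2].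
  by move=> /(_ ltac:(bs) ltac:(bs) isT) /andP [_].
case: (eqVneq b1 b2) => [eb|nb].
  subst b2; exfalso.
  by apply: (@closed_nb r [:: a1; b1; a2; r]); [bs|bs|by []|by rewrite !inE eqxx !orbT].
have := @nocommon G1 [:: f1; b1; a1; r; a2; b2; f2; G2].
by move=> /(_ ltac:(bs) ltac:(bs) isT) /andP [_].
Qed.

Lemma leaf_uniq v a b : is_leaf e v -> e v a -> e v b -> a = b.
Proof.
rewrite /is_leaf /deg => /cards1P [x hx] ha hb.
have : a \in nbhd e v by rewrite inE.
have : b \in nbhd e v by rewrite inE.
by rewrite hx !inE => /eqP -> /eqP ->.
Qed.

Lemma nonleaf_ex c z : e c z -> ~~ is_leaf e c -> exists d, e c d /\ d != z.
Proof.
move=> ecz nl.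
have zin : z \in nbhd e c by rewrite inE.
have : 0 < #|nbhd e c :\ z|.
  have := cardsD1 z (nbhd e c); rewrite zin.
  move: nl; rewrite /is_leaf /deg => nl h; move: nl; rewrite h; lia.
case/card_gt0P => d; rewrite !inE => /andP [dz ecd]; by exists d.
Qed.

Lemma cf_common a v m : a != v -> e a m -> e v m -> cf a v.
Proof.
move=> nav eam evm; rewrite /cf nav /=; apply/negP => /disjP /(_ m).
by rewrite !inE eam evm => /(_ isT isT).
Qed.

Lemma cfP a v : cf a v -> a != v /\ exists m, e a m /\ e v m.
Proof.
move=> /andP [nav nd]; split => //.
case: (boolP [exists m, e a m && e v m]) => [/existsP [m /andP [h1 h2]]|].
  by exists m.
move=> /existsPn H; exfalso; move/negP: nd; apply; apply/disjP => m.
by rewrite !inE => h1 h2; move: (H m); rewrite h1 h2.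
Qed.

Definition GD (r q : T) := forall a b, e r a -> a != q -> e a b -> b != r ->
    exists f g, [/\ e b f, f != a, e f g & g != b].

Lemma packU (J X : {set T}) :
  (forall g1 g2, g1 \in J -> g2 \in J -> g1 != g2 -> [disjoint nbhd e g1 & nbhd e g2]) ->
  (forall y1 y2, y1 \in X -> y2 \in X -> y1 != y2 -> [disjoint nbhd e y1 & nbhd e y2]) ->
  (forall g y, g \in J -> y \in X -> [disjoint nbhd e g & nbhd e y]) ->
  open_packing e (J :|: X).
Proof.
move=> hJ hX hJX; apply/packP => x y; rewrite !inE.
move=> /orP [xJ|xX] /orP [yJ|yX] nxy.
- exact: hJ.
- exact: hJX.
- by rewrite disjoint_sym; apply: hJX.
- exact: hX.
Qed.

Lemma pack1 a y1 y2 : y1 \in [set a] -> y2 \in [set a] -> y1 != y2 ->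
  [disjoint nbhd e y1 & nbhd e y2].
Proof. by rewrite !inE => /eqP -> /eqP ->; rewrite eqxx. Qed.

Lemma pack2 a b y1 y2 : [disjoint nbhd e a & nbhd e b] ->
  y1 \in [set a; b] -> y2 \in [set a; b] -> y1 != y2 ->
  [disjoint nbhd e y1 & nbhd e y2].
Proof.
move=> dab; rewrite !inE => /orP [/eqP->|/eqP->] /orP [/eqP->|/eqP->];
  rewrite ?eqxx // => _; by rewrite disjoint_sym.
Qed.

Lemma K1 (hU : in_class_U e) s l u w x : e s l -> is_leaf e l -> e s u ->
  ~~ is_leaf e u -> e u w -> w != s -> e w x -> x != u -> GD x w -> False.
Proof.
move=> esl ll esu nlu euw ws ewx xu gd.
have [J [J1 J2 J3]] := mkJ gd.
have lu : l != u by apply: contraNneq nlu => <-.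
have := @nocommon l [:: s; u; w; x].
move=> /(_ ltac:(bs) ltac:(bs) isT) /= /andP [lx dlx].
have Ju : forall g, g \in J -> (u != g) && [disjoint nbhd e u & nbhd e g].
  move=> g /J1 [a b f h1 h2 h3 h4 h5 h6 h7 h8].
  by have := @nocommon u [:: w; x; a; b; f; g]; move=> /(_ ltac:(bs) ltac:(bs) isT).
have Jl : forall g, g \in J -> (l != g) && [disjoint nbhd e l & nbhd e g].
  move=> g /J1 [a b f h1 h2 h3 h4 h5 h6 h7 h8].
  by have := @nocommon l [:: s; u; w; x; a; b; f; g]; move=> /(_ ltac:(bs) ltac:(bs) isT).
have Jx : forall g, g \in J -> (x != g) && [disjoint nbhd e x & nbhd e g].
  move=> g /J1 [a b f h1 h2 h3 h4 h5 h6 h7 h8].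
  by have := @nocommon x [:: a; b; f; g]; move=> /(_ ltac:(bs) ltac:(bs) isT).
apply: (@KL J [set u] [set l; x] hU).
- apply: packU => //; first exact: pack1.
  move=> g y gJ; rewrite inE => /eqP ->; rewrite disjoint_sym.
  by case/andP: (Ju g gJ).
- apply: packU => //; first by move=> y1 y2 h1 h2 h3; apply: (pack2 dlx h1 h2 h3).
  move=> g y gJ; rewrite !inE => /orP [/eqP->|/eqP->]; rewrite disjoint_sym.
    by case/andP: (Jl g gJ).
  by case/andP: (Jx g gJ).
- apply/disjP => y; rewrite !inE => /orP [/eqP->|/eqP->] yJ.
    by move: (Jl l yJ); rewrite eqxx.
  by move: (Jx x yJ); rewrite eqxx.
- move=> v [|[b]]; rewrite !inE.
    move=> /orP [/eqP->|/eqP->]; left; right; exists u; rewrite ?inE //.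
      by apply: (@cf_common _ _ s); cfs.
    by apply: (@cf_common _ _ w); cfs.
  move=> /orP [/eqP->|/eqP->] /cfP [nbv [m [ebm evm]]].
    have ms : m = s by apply: (leaf_uniq ll) => //; rewrite esym.
    subst m; case: (eqVneq v u) => [->|nvu]; first by left; left; rewrite inE.
    by left; right; exists u; rewrite ?inE //; apply: (@cf_common _ _ s); cfs.
  case: (eqVneq m w) => [mw|mw].
    subst m; case: (eqVneq v u) => [->|nvu]; first by left; left; rewrite inE.
    by left; right; exists u; rewrite ?inE //; apply: (@cf_common _ _ w); cfs.
  have [g gJ [f [k1 k2 k3]]] := J2 m v ebm mw ltac:(by rewrite esym) ltac:(by rewrite eq_sym).
  by right; right; exists g => //; apply: (@cf_common _ _ f); cfs.
- by rewrite cards1 cards2 lx.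
Qed.

Lemma K3 (hU : in_class_U e) s u w x z : e s u -> e u w -> w != s -> e w x ->
  x != u -> e x z -> z != w -> (forall c, e z c -> c != x -> is_leaf e c) ->
  GD s u -> False.
Proof.
move=> esu euw ws ewx xu exz zw ps gd.
have [J [J1 J2 J3]] := mkJ gd.
have := @nocommon s [:: u; w; x; z].
move=> /(_ ltac:(bs) ltac:(bs) isT) /= /andP [sz dsz].
have Jw : forall g, g \in J -> (w != g) && [disjoint nbhd e w & nbhd e g].
  move=> g /J1 [a b f h1 h2 h3 h4 h5 h6 h7 h8].
  by have := @nocommon w [:: u; s; a; b; f; g]; move=> /(_ ltac:(bs) ltac:(bs) isT).
have Js : forall g, g \in J -> (s != g) && [disjoint nbhd e s & nbhd e g].
  move=> g /J1 [a b f h1 h2 h3 h4 h5 h6 h7 h8].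
  by have := @nocommon s [:: a; b; f; g]; move=> /(_ ltac:(bs) ltac:(bs) isT).
have Jz : forall g, g \in J -> (z != g) && [disjoint nbhd e z & nbhd e g].
  move=> g /J1 [a b f h1 h2 h3 h4 h5 h6 h7 h8].
  by have := @nocommon z [:: x; w; u; s; a; b; f; g]; move=> /(_ ltac:(bs) ltac:(bs) isT).
apply: (@KL J [set w] [set s; z] hU).
- apply: packU => //; first exact: pack1.
  move=> g y gJ; rewrite inE => /eqP ->; rewrite disjoint_sym.
  by case/andP: (Jw g gJ).
- apply: packU => //; first by move=> y1 y2 h1 h2 h3; apply: (pack2 dsz h1 h2 h3).
  move=> g y gJ; rewrite !inE => /orP [/eqP->|/eqP->]; rewrite disjoint_sym.
    by case/andP: (Js g gJ).
  by case/andP: (Jz g gJ).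
- apply/disjP => y; rewrite !inE => /orP [/eqP->|/eqP->] yJ.
    by move: (Js s yJ); rewrite eqxx.
  by move: (Jz z yJ); rewrite eqxx.
- move=> v [|[b]]; rewrite !inE.
    move=> /orP [/eqP->|/eqP->]; left; right; exists w; rewrite ?inE //.
      by apply: (@cf_common _ _ u); cfs.
    by apply: (@cf_common _ _ x); cfs.
  move=> /orP [/eqP->|/eqP->] /cfP [nbv [m [ebm evm]]].
    case: (eqVneq m u) => [mu|mu].
      subst m; case: (eqVneq v w) => [->|nvw]; first by left; left; rewrite inE.
      by left; right; exists w; rewrite ?inE //; apply: (@cf_common _ _ u); cfs.
    have [g gJ [f [k1 k2 k3]]] := J2 m v ebm mu ltac:(by rewrite esym) ltac:(by rewrite eq_sym).
    by right; right; exists g => //; apply: (@cf_common _ _ f); cfs.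
  case: (eqVneq m x) => [mx|mx].
    subst m; case: (eqVneq v w) => [->|nvw]; first by left; left; rewrite inE.
    by left; right; exists w; rewrite ?inE //; apply: (@cf_common _ _ x); cfs.
  have lm := ps m ebm mx.
  have vz : v = z by apply: (leaf_uniq lm); rewrite esym.
  by move: nbv; rewrite vz eqxx.
- by rewrite cards1 cards2 sz.
Qed.

Lemma K2side s u w u' w' g : e s u -> e s u' -> u != u' -> e u w -> w != s ->
  e u' w' -> w' != s -> jw w u g ->
  [/\ (s != g) && [disjoint nbhd e s & nbhd e g],
      (w != g) && [disjoint nbhd e w & nbhd e g] &
      (w' != g) && [disjoint nbhd e w' & nbhd e g]].
Proof.
move=> esu esu' uu' euw ws eu'w' w's [a b f h1 h2 h3 h4 h5 h6 h7 h8]; split.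
- by have := @nocommon s [:: u; w; a; b; f; g]; move=> /(_ ltac:(bs) ltac:(bs) isT).
- by have := @nocommon w [:: a; b; f; g]; move=> /(_ ltac:(bs) ltac:(bs) isT).
- by have := @nocommon w' [:: u'; s; u; w; a; b; f; g]; move=> /(_ ltac:(bs) ltac:(bs) isT).
Qed.

Lemma K2 (hU : in_class_U e) s u1 u2 w1 w2 : e s u1 -> e s u2 -> u1 != u2 ->
  e u1 w1 -> w1 != s -> e u2 w2 -> w2 != s -> GD w1 u1 -> GD w2 u2 -> False.
Proof.
move=> esu1 esu2 u12 euw1 w1s euw2 w2s gd1 gd2.
have [Ja [Ja1 Ja2 Ja3]] := mkJ gd1.
have [Jb [Jb1 Jb2 Jb3]] := mkJ gd2.
have u21 : u2 != u1 by rewrite eq_sym.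
have := @nocommon w1 [:: u1; s; u2; w2].
move=> /(_ ltac:(bs) ltac:(bs) isT) /= /andP [w12 dw12].
have Sa : forall g, g \in Ja -> _ := fun g gJ => K2side esu1 esu2 u12 euw1 w1s euw2 w2s (Ja1 g gJ).
have Sb : forall g, g \in Jb -> _ := fun g gJ => K2side esu2 esu1 u21 euw2 w2s euw1 w1s (Jb1 g gJ).
have cross : forall g h, g \in Ja -> h \in Jb -> [disjoint nbhd e g & nbhd e h].
  move=> g h /Ja1 [a b f h1 h2 h3 h4 h5 h6 h7 h8] /Jb1 [a' b' f' k1 k2 k3 k4 k5 k6 k7 k8].
  by have := @nocommon g [:: f; b; a; w1; u1; s; u2; w2; a'; b'; f'; h];
    move=> /(_ ltac:(bs) ltac:(bs) isT) /andP [].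
have JJ : forall g1 g2, g1 \in Ja :|: Jb -> g2 \in Ja :|: Jb -> g1 != g2 ->
    [disjoint nbhd e g1 & nbhd e g2].
  move=> g1 g2; rewrite !inE => /orP [g1J|g1J] /orP [g2J|g2J] ng.
  * exact: Ja3.
  * exact: cross.
  * by rewrite disjoint_sym; apply: cross.
  * exact: Jb3.
apply: (@KL (Ja :|: Jb) [set s] [set w1; w2] hU).
- apply: packU => //; first exact: pack1.
  move=> g y; rewrite !inE => /orP [gJ|gJ] /eqP ->; rewrite disjoint_sym.
    by case: (Sa g gJ) => /andP [].
  by case: (Sb g gJ) => /andP [].
- apply: packU => //; first by move=> y1 y2 h1 h2 h3; apply: (pack2 dw12 h1 h2 h3).
  move=> g y; rewrite !inE => /orP [gJ|gJ] /orP [/eqP->|/eqP->]; rewrite disjoint_sym.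
  * by case: (Sa g gJ) => _ /andP [].
  * by case: (Sa g gJ) => _ _ /andP [].
  * by case: (Sb g gJ) => _ _ /andP [].
  * by case: (Sb g gJ) => _ /andP [].
- apply/disjP => y; rewrite !inE => /orP [/eqP->|/eqP->] /orP [yJ|yJ].
  + by case: (Sa w1 yJ) => _ /andP []; rewrite eqxx.
  + by case: (Sb w1 yJ) => _ _ /andP []; rewrite eqxx.
  + by case: (Sa w2 yJ) => _ _ /andP []; rewrite eqxx.
  + by case: (Sb w2 yJ) => _ /andP []; rewrite eqxx.
- move=> v [|[b]]; rewrite !inE.
    move=> /orP [/eqP->|/eqP->]; left; right; exists s; rewrite ?inE //.
      by apply: (@cf_common _ _ u1); cfs.
    by apply: (@cf_common _ _ u2); cfs.
  move=> /orP [/eqP->|/eqP->] /cfP [nbv [m [ebm evm]]].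
    case: (eqVneq m u1) => [mu|mu].
      subst m; case: (eqVneq v s) => [->|nvs]; first by left; left; rewrite inE.
      by left; right; exists s; rewrite ?inE //; apply: (@cf_common _ _ u1); cfs.
    have [g gJ [f [k1 k2 k3]]] := Ja2 m v ebm mu ltac:(by rewrite esym) ltac:(by rewrite eq_sym).
    by right; right; exists g; rewrite ?inE ?gJ //; apply: (@cf_common _ _ f); cfs.
  case: (eqVneq m u2) => [mu|mu].
    subst m; case: (eqVneq v s) => [->|nvs]; first by left; left; rewrite inE.
    by left; right; exists s; rewrite ?inE //; apply: (@cf_common _ _ u2); cfs.
  have [g gJ [f [k1 k2 k3]]] := Jb2 m v ebm mu ltac:(by rewrite esym) ltac:(by rewrite eq_sym).
  by right; right; exists g; rewrite ?inE ?gJ ?orbT //; apply: (@cf_common _ _ f); cfs.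
- by rewrite cards1 cards2 w12.
Qed.

Lemma main (hU : in_class_U e) s : single_star_support e s ->
  #|[set u | e s u & ~~ is_leaf e u]| <= 1.
Proof.
move=> /andP [/existsP [l /andP [esl ll]] /forallP hns].
have Hsup : forall v y, e s v -> e v y -> ~~ is_leaf e y.
  move=> v y esv evy; move: (hns v); rewrite esv /= => /existsPn /(_ y).
  by rewrite evy.
rewrite leqNgt; apply/negP => /card_gt1P [u1 [u2 [h1 h2 nu]]].
move: h1 h2; rewrite !inE => /andP [esu1 nl1] /andP [esu2 nl2].
case: (classic (exists u w x, [/\ e s u, ~~ is_leaf e u, e u w, w != s &
    [/\ e w x, x != u & GD x w]])) => [[u [w [x [k1 k2 k3 k4 [k5 k6 k7]]]]]|nA].
  exact: (K1 hU esl ll k1 k2 k3 k4 k5 k6 k7).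
case: (classic (exists u w x z, [/\ e s u, e u w, w != s, e w x &
    [/\ x != u, e x z, z != w & forall c, e z c -> c != x -> is_leaf e c]]))
    => [[u [w [x [z [k1 k2 k3 k4 [k5 k6 k7 k8]]]]]]|nB].
  apply: (K3 hU k1 k2 k3 k4 k5 k6 k7 k8).
  move=> a b esa au eab bs.
  have nlb : ~~ is_leaf e b := Hsup a b esa eab.
  have [x' [ebx x'a]] := nonleaf_ex (c:=b) (z:=a) ltac:(by rewrite esym) nlb.
  have nla : ~~ is_leaf e a.
    apply/negP => la; move: bs; rewrite (leaf_uniq la eab (_ : e a s)) ?eqxx //.
    by rewrite esym.
  case: (classic (exists z', e x' z' /\ z' != b)) => [[z' [q1 q2]]|nz].
    by exists x', z'.
  exfalso; apply: nA; exists a, b, x'; split => //.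
  split => // a' b' ea' a'b _ _; exfalso; apply: nz; by exists a'.
have [w1 [euw1 w1s]] := nonleaf_ex (c:=u1) (z:=s) ltac:(by rewrite esym) nl1.
have [w2 [euw2 w2s]] := nonleaf_ex (c:=u2) (z:=s) ltac:(by rewrite esym) nl2.
have gdC : forall u w, e s u -> e u w -> w != s -> GD w u.
  move=> u w esu euw ws a b ewa au eab bw.
  case: (classic (exists c, [/\ e b c, c != a & ~~ is_leaf e c])) => [[c [k1 k2 k3]]|nc].
    have [d [k4 k5]] := nonleaf_ex (c:=c) (z:=b) ltac:(by rewrite esym) k3.
    by exists c, d.
  exfalso; apply: nB; exists u, w, a, b; split => //; split => // c k1 k2.
  apply: NNPP => k3; apply: nc; exists c; split => //; exact/negP.
exact: (K2 hU esu1 esu2 nu euw1 w1s euw2 w2s (gdC _ _ esu1 euw1 w1s) (gdC _ _ esu2 euw2 w2s)).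
Qed.

End G.

Theorem lemma5 (T : finType) (e : rel T) :
  simple_graph e ->
  connected_graph e ->
  min_degree_one e ->
  girth_ge e 15 ->
  in_class_U e ->
  forall s : T, single_star_support e s ->
  #|[set u | e s u & ~~ is_leaf e u]| <= 1.
Proof.
move=> [esym eirr] _ _ gir hU s hs.
exact: (main esym eirr gir hU hs).
Qed.
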